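(* Let $X$ be a uniconnected cycle set of square-free odd order. Then $\mathcal{G}(X)$ is a Z-group and $X$ has multipermutation level at most $2$. Moreover, $X$ has multipermutation level $1$ if and only if $\mathcal{G}(X)$ is abelian.
   Context: A (non-degenerate) cycle set is a set $X$ with an operation such that each $\sigma_x:y\mapsto x\cdot y$ is bijective, $(x\cdot y)\cdot(x\cdot z)=(y\cdot x)\cdot(y\cdot z)$, and $x\mapsto x\cdot x$ is bijective. $\mathcal{G}(X)$ is the permutation group generated by the $\sigma_x$; $X$ is uniconnected if $\mathcal{G}(X)$ acts regularly on $X$. A Z-group is a finite group with all Sylow subgroups cyclic. $\mathrm{Ret}(X)$ is the quotient of $X$ by $x\sim y\iff\sigma_x=\sigma_y$; $\mathrm{Ret}^0(X)=X$, $\mathrm{Ret}^i(X)=\mathrm{Ret}(\mathrm{Ret}^{i-1}(X))$; the multipermutation level is the least $n$ with $|\mathrm{Ret}^n(X)|=1$. *)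

(* Defs.v *)
From mathcomp Require Import all_boot all_fingroup all_solvable.
Set Implicit Arguments. Unset Strict Implicit. Unset Printing Implicit Defensive.
Local Open Scope group_scope.

(* A (non-degenerate) cycle set structure on a finite type T with
   operation op, where op x y is x . y *)
Definition cycle_set (T : finType) (op : T -> T -> T) : Prop :=
  [/\ (forall x, bijective (op x)),
      (forall x y z, op (op x y) (op x z) = op (op y x) (op y z))
    & bijective (fun x => op x x)].

Definition sigma_set (T : finType) (op : T -> T -> T) : {set {perm T}} :=
  [set s : {perm T} | [exists x, [forall y, s y == op x y]]].

Definition permG (T : finType) (op : T -> T -> T) : {set {perm T}} :=
  <<sigma_set op>>.

Definition uniconnected (T : finType) (op : T -> T -> T) : Prop :=
  forall x y : T, exists! g : {perm T}, g \in permG op /\ g x = y.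

Definition squarefree (n : nat) : Prop :=
  forall p, prime p -> ~~ ((p * p)%N %| n).

Record magma := Magma { carrier :> finType; mop : carrier -> carrier -> carrier }.

Section Retraction.
Variable M : magma.

Definition ret_rel (x y : M) : bool := [forall z, mop x z == mop y z].
Definition ret_cls (x : M) : {set M} := [set y | ret_rel x y].
Definition ret_classes : {set {set M}} := ret_cls @: [set: M].
Definition ret_type : finType := {C : {set M} | C \in ret_classes}.
Definition ret_proj (x : M) : ret_type :=
  exist (fun C => C \in ret_classes) (ret_cls x) (imset_f ret_cls (in_setT x)).
Definition ret_op (C D : ret_type) : ret_type :=
  match [pick x in val C], [pick y in val D] with
  | Some x, Some y => ret_proj (mop x y)
  | _, _ => C
  end.
Definition Ret : magma := Magma ret_op.
End Retraction.

Definition cs_magma (T : finType) (op : T -> T -> T) : magma := Magma op.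

Definition Retn (n : nat) (M : magma) : magma := iter n Ret M.

Definition has_mpl (M : magma) (n : nat) : Prop :=
  #|Retn n M| = 1%N /\ forall m, (m < n)%N -> #|Retn m M| <> 1%N.

(* Main.v *)
Require Import Defs.
From mathcomp Require Import all_boot all_fingroup all_solvable.
From HB Require Import structures.
From Stdlib Require Import Classical_Prop.
Set Implicit Arguments. Unset Strict Implicit. Unset Printing Implicit Defensive.

Lemma N2 p q k : prime p -> prime q -> ~~ (q %| p.-1) -> k ^ q = 1 %[mod p] ->
  coprime k p -> k = 1 %[mod p].
Proof.
move=> pp pq nd Hq cop.
have Ht : k ^ p.-1 = 1 %[mod p] by rewrite -(totient_prime pp) Euler_exp_totient.
have p1 : 0 < p.-1 by rewrite -subn1 subn_gt0 prime_gt1.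
have [a _ /dvdnP[j Hj]] := Bezoutl q p1.
have cq : gcdn p.-1 q = 1.
  by apply/eqP; rewrite gcdnC -/(coprime q p.-1) prime_coprime.
rewrite cq in Hj.
have E1 : k ^ (1 + a * q) = 1 %[mod p].
  by rewrite Hj mulnC expnM -modnXm Ht modnXm exp1n.
have E2 : k ^ (a * q) = 1 %[mod p].
  by rewrite mulnC expnM -modnXm Hq modnXm exp1n.
by rewrite -E1 expnD expn1 -modnMmr E2 modnMmr muln1.
Qed.

Lemma N1 a m : coprime a m -> 0 < m -> exists u, u * a = 1 %[mod m].
Proof.
move=> cop m0.
have [u _ /dvdnP[j Hj]] := Bezoutl a m0.
rewrite gcdnC (eqP cop) in Hj.
(* 1 + u*a = j*m ; want v*a = 1 mod m : take v = (m-1)*u *)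
exists ((m.-1) * u).
have : (m.-1 * u * a + (1 + u * a)) = m * (u * a) + 1 by rewrite addnCA -mulnA -mulSnr prednK // addnC mulnA.
rewrite Hj => H.
have := congr1 (modn^~ m) H.
rewrite addnC modnMDl [m * _]mulnC modnMDl => <-.
by [].

Qed.

Local Open Scope group_scope.


Section CS.
Variables (T : finType) (op : T -> T -> T).
Hypothesis Hcs : cycle_set op.

Lemma op_inj x : injective (op x).
Proof. by case: Hcs => H _ _; apply: bij_inj. Qed.

Definition sig x : {perm T} := perm (@op_inj x).
Lemma sigE x y : sig x y = op x y. Proof. by rewrite permE. Qed.

Lemma sig_id x y : sig x * sig (op x y) = sig y * sig (op y x).
Proof. by apply/permP => z; rewrite !permM !sigE; case: Hcs => _ H _; rewrite H. Qed.

Definition GG : {group {perm T}} := [group of permG op].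

Lemma sig_in x : sig x \in GG.
Proof. apply: mem_gen; rewrite inE; apply/existsP; exists x; apply/forallP => y; by rewrite sigE. Qed.

Fixpoint phiA (h : {perm T}) (l : seq T) : {perm T} :=
  if l is x :: l' then phiA (h * sig (h x)) l' * (sig (h x))^-1 else 1.
Definition phi l := phiA 1 l.

Lemma phiA_map h (k : {perm T}) l : phiA h (map k l) = phiA (k * h) l.
Proof.
elim: l h => [|x l IH] h //=.
by rewrite IH permM mulgA.
Qed.

Lemma phi_map (k : {perm T}) l : phi (map k l) = phiA k l.
Proof. by rewrite /phi phiA_map mulg1. Qed.

Lemma phi_cons x l : phi (x :: l) = phi (map (sig x) l) * (sig x)^-1.
Proof. by rewrite phi_map /phi /= perm1 mul1g. Qed.

Lemma phi_nil : phi [::] = 1. Proof. by []. Qed.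

Lemma phiA_in h l : phiA h l \in GG.
Proof.
elim: l h => [|x l IH] h /=; first exact: group1.
by rewrite groupM ?groupV ?sig_in.
Qed.
Lemma phi_in l : phi l \in GG. Proof. exact: phiA_in. Qed.

Lemma map_mm (f g : {perm T}) (l : seq T) : map f (map g l) = map (g * f) l.
Proof. by rewrite -map_comp; apply: eq_map => z; rewrite permM. Qed.

Lemma phi_mm (f g : {perm T}) l : phi (map f (map g l)) = phi (map (g * f) l).
Proof. by rewrite !phi_map phiA_map. Qed.

Lemma phi_swap x y l : phi [:: x, y & l] = phi [:: y, x & l].
Proof.
rewrite phi_cons [phi [:: y, x & l]]phi_cons /= !phi_cons !phi_mm -!mulgA -!invMg !sigE.
by rewrite sig_id.
Qed.

Lemma phi_catm (k : {perm T}) l1 l2 :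
  phi (map k l1 ++ l2) = phi (map (phi (map k l1))^-1 l2) * phi (map k l1).
Proof.
elim: l1 k l2 => [|x l1 IH] k l2 /=.
  rewrite invg1 mulg1; congr phi; rewrite -[l2 in LHS]map_id; apply: eq_map => z.
  by rewrite perm1.
rewrite !phi_cons map_cat !map_mm IH invMg invgK map_mm mulgA.
by [].
Qed.

Lemma phi_cat l1 l2 : phi (l1 ++ l2) = phi (map (phi l1)^-1 l2) * phi l1.
Proof.
have := phi_catm 1 l1 l2.
have -> : map (1 : {perm T}) l1 = l1.
  by rewrite -[RHS]map_id; apply: eq_map => z; rewrite perm1.
by [].
Qed.

Lemma phi_perm l l' : perm_eq l l' -> phi l = phi l'.
Proof.
move: {2}(size l) (leqnn (size l)) => n; elim: n l l' => [|n IH] l l'.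
  by case: l => // _ Hp; move: Hp; rewrite perm_sym => /perm_nilP ->.
case: l => [|x l1] Hs Hp; first by move: Hp; rewrite perm_sym => /perm_nilP ->.
case: l' Hp => [|y l1'] Hp; first by move/perm_nilP: Hp.
have cons_eq : forall z A B, size A <= n -> perm_eq A B -> phi (z :: A) = phi (z :: B).
  move=> z A B HA HAB; rewrite !phi_cons; congr (_ * _); apply: IH; first by rewrite size_map.
  by rewrite perm_map.
have Hs1 : size l1 <= n by [].
have [Exy|Hxy] := eqVneq x y.
  by subst y; apply: cons_eq => //; move: Hp; rewrite perm_cons.
have yl1 : y \in l1.
  have : y \in x :: l1 by rewrite (perm_mem Hp) mem_head.
  by rewrite in_cons eq_sym (negbTE Hxy).
have Hr := perm_to_rem yl1.
rewrite (cons_eq x _ _ Hs1 Hr) phi_swap.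
apply: cons_eq.
  by have := perm_size Hr; rewrite /= => <-.
rewrite -(perm_cons y); apply: (@perm_trans _ (x :: l1)); last exact: Hp.
apply: (@perm_trans _ [:: x, y & rem y l1]).
  by rewrite (perm_catCA [:: y] [:: x]).
by rewrite perm_cons perm_sym.
Qed.

Lemma map1 (l : seq T) : map (1 : {perm T}) l = l.
Proof. by rewrite -[RHS]map_id; apply: eq_map => z; rewrite perm1. Qed.

Lemma phi_mul l1 l2 : phi (l1 ++ map (phi l1) l2) = phi l2 * phi l1.
Proof. by rewrite phi_cat map_mm mulgV map1. Qed.

Lemma phi1 x : phi [:: x] = (sig x)^-1.
Proof. by rewrite phi_cons mul1g. Qed.

Lemma sigma_setE s : (s \in sigma_set op) = [exists x, s == sig x].
Proof.
rewrite inE; apply/existsP/existsP => -[x Hx]; exists x.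
  by apply/eqP/permP => y; rewrite sigE; apply/eqP; move/forallP: Hx.
by apply/forallP => y; rewrite (eqP Hx) sigE.
Qed.

Lemma phi_surj g : g \in GG -> exists l, phi l = g.
Proof.
have Pmul : forall a b, (exists l, phi l = a) -> (exists l, phi l = b) -> exists l, phi l = a * b.
  move=> a b [la <-] [lb <-]; exists (lb ++ map (phi lb) la); exact: phi_mul.
have Pexp : forall a m, (exists l, phi l = a) -> exists l, phi l = a ^+ m.
  move=> a m Ha; elim: m => [|m IH]; first by exists [::].
  by rewrite expgS; apply: Pmul.
move/gen_prodgP => [n [c Hc ->]].
elim/big_ind: _ => //; first by exists [::].
move=> i _; have := Hc i; rewrite sigma_setE => /existsP[x /eqP ->].
rewrite -[sig x]invgK invg_expg; apply: Pexp; exists [:: x]; exact: phi1.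
Qed.

Lemma phi_wdr l l' m : phi l = phi l' -> phi (m ++ l) = phi (m ++ l').
Proof.
move=> E; rewrite (phi_perm (permEl (perm_catC m l))) (phi_perm (permEl (perm_catC m l'))).
by rewrite !phi_cat E.
Qed.

Definition Bt := {g : {perm T} | g \in GG}.
HB.instance Definition _ := Finite.on Bt.

Lemma lst_ex (u : Bt) : exists l, phi l == val u.
Proof. by have [l Hl] := phi_surj (valP u); exists l; apply/eqP. Qed.
Definition lst (u : Bt) : seq T := xchoose (lst_ex u).
Lemma lstE u : phi (lst u) = val u.
Proof. exact/eqP/(xchooseP (lst_ex u)). Qed.

Definition addB (u v : Bt) : Bt := Sub (phi (lst u ++ lst v)) (phi_in _).
Lemma addBE u v l1 l2 : phi l1 = val u -> phi l2 = val v -> val (addB u v) = phi (l1 ++ l2).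
Proof.
move=> H1 H2; rewrite /addB SubK.
rewrite (phi_wdr _ (etrans (lstE v) (esym H2))).
rewrite (phi_perm (permEl (perm_catC _ _))) (phi_perm (permEl (perm_catC l1 _))).
by rewrite (phi_wdr _ (etrans (lstE u) (esym H1))).
Qed.

Definition zeroB : Bt := Sub 1 (group1 _).
Definition pinv (u : Bt) : Bt := Sub (val u)^-1 (groupVr (valP u)).
Definition negB (u : Bt) : Bt := Sub (phi (map (val u) (lst (pinv u)))) (phi_in _).

Lemma addBA : associative addB.
Proof.
move=> u v w; apply: val_inj.
rewrite (addBE (lstE u) (esym (addBE (lstE v) (lstE w)))).
by rewrite (addBE (esym (addBE (lstE u) (lstE v))) (lstE w)) catA.
Qed.

Lemma add0B : left_id zeroB addB.
Proof. by move=> u; apply: val_inj; rewrite (@addBE zeroB u [::] _ (erefl _) (lstE u)) lstE. Qed.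

Lemma addBC : commutative addB.
Proof.
move=> u v; apply: val_inj; rewrite (addBE (lstE u) (lstE v)) (addBE (lstE v) (lstE u)).
exact/phi_perm/permEl/perm_catC.
Qed.

Lemma addNB : left_inverse zeroB negB addB.
Proof.
move=> u; rewrite addBC; apply: val_inj.
rewrite (@addBE u (negB u) _ (map (val u) (lst (pinv u))) (lstE u) (erefl _)).
have -> : [seq val u i | i <- lst (pinv u)] = map (phi (lst u)) (lst (pinv u)) by rewrite lstE.
by rewrite phi_mul !lstE /= mulVg.
Qed.

HB.instance Definition _ := Finite_isGroup.Build Bt addBA add0B addNB.

Lemma valM (u v : Bt) l1 l2 : phi l1 = val u -> phi l2 = val v -> val (u * v) = phi (l1 ++ l2).
Proof. exact: addBE. Qed.

Lemma phi_wdmap l l' (g : Bt) : phi l = phi l' -> phi (map (val g) l) = phi (map (val g) l').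
Proof.
move=> E.
have H : forall l0, val (g * Sub (phi (map (val g) l0)) (phi_in _)) = phi l0 * val g.
  move=> l0; rewrite (@valM g (Sub (phi (map (val g) l0)) (phi_in _)) _ (map (val g) l0) (lstE g) (erefl _)).
  by rewrite -{1}(lstE g) phi_mul lstE.
have : g * Sub (phi (map (val g) l)) (phi_in _) = g * Sub (phi (map (val g) l')) (phi_in _).
  by apply: val_inj; rewrite !H E.
by move/mulgI => /(congr1 val).
Qed.

Definition lam (g u : Bt) : Bt := Sub (phi (map (val g) (lst u))) (phi_in _).

Lemma lamE g u l : phi l = val u -> val (lam g u) = phi (map (val g) l).
Proof. by move=> H; rewrite /lam SubK; apply: phi_wdmap; rewrite lstE. Qed.

Lemma circE (g u : Bt) : val (g * lam g u) = val u * val g.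
Proof.
rewrite (valM (lstE g) (esym (lamE g (lstE u)))) -{1}(lstE g) phi_mul !lstE //.
Qed.

Lemma lamM g u v : lam g (u * v) = lam g u * lam g v.
Proof.
apply: val_inj; rewrite (lamE g (esym (valM (lstE u) (lstE v)))) map_cat.
by rewrite (valM (esym (lamE g (lstE u))) (esym (lamE g (lstE v)))).
Qed.

Lemma lam_comp (w h g : Bt) u : val w = val h * val g -> lam w u = lam g (lam h u).
Proof.
move=> E; apply: val_inj; rewrite (lamE w (lstE u)) (lamE g (esym (lamE h (lstE u)))).
by rewrite map_mm E.
Qed.

Lemma lam1 (g : Bt) u : val g = 1 -> lam g u = u.
Proof. by move=> E; apply: val_inj; rewrite (lamE g (lstE u)) E map1 lstE. Qed.

Definition sB x : Bt := Sub (sig x) (sig_in x).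
Definition aB x : Bt := Sub (phi [:: x]) (phi_in _).

Lemma lam_aB g x : lam g (aB x) = aB (val g x).
Proof. by apply: val_inj; rewrite (lamE g (erefl (val (aB x)))). Qed.

Lemma lam_inv (g : Bt) u : lam g (lam (pinv g) u) = u.
Proof. by rewrite -(@lam_comp zeroB) ?lam1 //= mulVg. Qed.
Lemma lam_inv' (g : Bt) u : lam (pinv g) (lam g u) = u.
Proof. by rewrite -(@lam_comp zeroB) ?lam1 //= mulgV. Qed.
Lemma lam_inj g : injective (lam g).
Proof. exact: can_inj (lam_inv' g). Qed.
Lemma lam_1 g : lam g 1 = 1.
Proof. by apply: (@mulgI _ (lam g 1)); rewrite -lamM !mulg1. Qed.

Lemma Babel : abelian [set: Bt].
Proof. by apply/centsP => x _ y _; apply: addBC. Qed.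

Definition Op p := 'O_p([set: Bt]).

Lemma memOp p x : (x \in Op p) = p.-elt x.
Proof.
apply: mem_normal_Hall (nilpotent_pcore_Hall p (abelian_nil Babel)) (pcore_normal _ _) _.
exact: in_setT.
Qed.

Lemma lamX g x n : lam g (x ^+ n) = (lam g x) ^+ n.
Proof. by elim: n => [|n IH]; rewrite ?lam_1 // !expgS lamM IH. Qed.

Lemma lam_pelt p g x : p.-elt x -> p.-elt (lam g x).
Proof.
move=> Hx; apply: pnat_dvd Hx; rewrite order_dvdn -lamX.
by rewrite expg_order lam_1.
Qed.

Lemma lam_Op p g x : x \in Op p -> lam g x \in Op p.
Proof. by rewrite !memOp; apply: lam_pelt. Qed.

Lemma lam_pow (g w : Bt) m u : val w = (val g) ^+ m -> lam w u = iter m (lam g) u.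
Proof.
elim: m w => [|m IH] w E /=; first by rewrite lam1.
have Hm : (val g) ^+ m \in GG by rewrite groupX // (valP g).
by rewrite (@lam_comp w (Sub ((val g) ^+ m) Hm : Bt) g) ?E ?expgSr // IH.
Qed.

Hypothesis Hsq : forall p, prime p -> ~~ (p * p %| #|{: Bt}|).

Lemma cardOp p : prime p -> #|Op p| %| p.
Proof.
move=> pp.
rewrite (card_Hall (nilpotent_pcore_Hall p (abelian_nil Babel))) cardsT p_part.
have n0 : 0 < #|{: Bt}| by apply/card_gt0P; exists 1.
have : logn p #|{: Bt}| <= 1.
  rewrite leqNgt; apply/negP => H; have := Hsq pp; rewrite mulnn.
  by rewrite (pfactor_dvdn _ _ n0) ?H.
case: (logn p #|{: Bt}|) => [|[|//]] _; by rewrite ?dvd1n ?expn1.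
Qed.

Lemma Op_cyc p : prime p -> exists y, Op p = <[y]> /\ #[y] %| p.
Proof.
move=> pp.
have : cyclic (Op p).
  case/primeP: (pp) => _ H; case/orP: (H _ (cardOp pp)) => /eqP E.
    by apply/cyclicP; exists 1; rewrite cycle1; apply: card1_trivg; rewrite E.
  by apply: prime_cyclic; rewrite E.
case/cyclicP => y Ey; exists y; split => //.
by rewrite /order -Ey cardOp.
Qed.

Lemma scalar p g : prime p -> exists k, forall c, c \in Op p -> lam g c = c ^+ k.
Proof.
move=> pp; have [y [Ey _]] := Op_cyc pp.
have : lam g y \in <[y]> by rewrite -Ey lam_Op // Ey cycle_id.
case/cycleP => k Hk; exists k => c; rewrite Ey => /cycleP[m ->].
by rewrite lamX Hk -!expgM mulnC.
Qed.


Definition vB (x : Bt) : {perm T} := val x.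

Lemma valX_Op q b : prime q -> b \in Op q -> (val b) ^+ q = 1.
Proof.
move=> pq Hb.
have Jg : group_set (vB @: Op q).
  apply/group_setP; split; first by apply/imsetP; exists (1 : Bt).
  move=> a c /imsetP[x Hx ->] /imsetP[y Hy ->]; apply/imsetP.
  by exists (y * lam y x); rewrite ?groupM ?lam_Op // /vB circE.
have := @order_dvdG _ (Group Jg) (val b) (imset_f vB Hb).
rewrite /= card_imset; last exact: val_inj.
move=> H; apply/eqP; rewrite -order_dvdn; exact: dvdn_trans H (cardOp pq).
Qed.

Lemma lamD p q b c : prime p -> prime q -> ~~ (q %| p.-1) -> b \in Op q -> c \in Op p ->
  lam b c = c.
Proof.
move=> pp pq nd Hb; have [y [Ey Hy]] := Op_cyc pp.
suff Hyy : lam b y = y by rewrite Ey => /cycleP[m ->]; rewrite lamX Hyy.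
have : lam b y \in <[y]> by rewrite -Ey lam_Op // Ey cycle_id.
case/cycleP => k Hk.
case/primeP: (pp) => p1 Hd; case/orP: (Hd _ Hy) => /eqP oy.
  by move/eqP: oy; rewrite order_eq1 => /eqP ->; rewrite lam_1.
have It : forall m, iter m (lam b) y = y ^+ (k ^ m).
  by elim=> [|m IH] //=; rewrite IH lamX Hk -expgM expnS.
have Hq : k ^ q = 1 %[mod p].
  have := @lam_pow b 1 q y (esym (valX_Op pq Hb)); rewrite lam1 // It => E.
  by apply/eqP; rewrite -oy -eq_expg_mod_order expg1 -E.
have cop : coprime k p.
  rewrite coprime_sym prime_coprime //; apply/negP => /dvdnP[j Ej].
  move: Hk; rewrite Ej mulnC expgM -oy expg_order expg1n -(lam_1 b) => /lam_inj Ey1.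
  by move: oy; rewrite Ey1 order1 => E1; move: p1; rewrite -E1.
have := N2 pp pq nd Hq cop.
by move/eqP; rewrite -oy -eq_expg_mod_order expg1 -Hk => /eqP.
Qed.

Lemma mulBC (x y : Bt) : x * y = y * x.
Proof. exact: addBC. Qed.

Lemma order_lam g x : #[lam g x] = #[x].
Proof.
apply/eqP; rewrite eqn_dvd !order_dvdn -lamX expg_order lam_1 eqxx /=.
by rewrite -(inj_eq (@lam_inj g)) lamX expg_order lam_1.
Qed.

Lemma lam_constt g x (i : nat) : lam g (x.`_i) = (lam g x).`_i.
Proof. by rewrite /constt order_lam lamX. Qed.

Lemma peltN (i : nat) (x : Bt) : ~~ prime i -> i.-elt x -> x = 1.
Proof.
move=> ni Hx; apply/eqP; rewrite -order_eq1; apply/negPn/negP => H.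
have H1 : 1 < #[x] by rewrite ltn_neqAle eq_sym H order_gt0.
have := pnatPpi Hx (eqbRL (pi_pdiv _) H1); rewrite inE => /eqP Ei.
by move: ni; rewrite -Ei pdiv_prime.
Qed.

Lemma morph_eq (f1 f2 : Bt -> Bt) :
  {morph f1 : x y / x * y} -> {morph f2 : x y / x * y} ->
  (forall p c, prime p -> c \in Op p -> f1 c = f2 c) -> forall x, f1 x = f2 x.
Proof.
move=> M1 M2 H x.
have U1 : f1 1 = 1 by apply: (@mulgI _ (f1 1)); rewrite -M1 !mulg1.
have U2 : f2 1 = 1 by apply: (@mulgI _ (f2 1)); rewrite -M2 !mulg1.
rewrite -(prod_constt x) (big_morph f1 M1 U1) (big_morph f2 M2 U2).
apply: eq_bigr => i _; case: (boolP (prime i)) => pi.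
  by apply: (H i) => //; rewrite memOp p_elt_constt.
by rewrite (peltN pi (p_elt_constt _ _)) U1 U2.
Qed.

Lemma lam_comm g h x : lam g (lam h x) = lam h (lam g x).
Proof.
apply: (@morph_eq (fun x => lam g (lam h x)) (fun x => lam h (lam g x))).
- by move=> u v /=; rewrite !lamM.
- by move=> u v /=; rewrite !lamM.
move=> p c pp Hc /=.
have [kg Hg] := scalar g pp; have [kh Hh] := scalar h pp.
by rewrite (Hh c Hc) lamX (Hg c Hc) lamX (Hh c Hc) -!expgM mulnC.
Qed.

Lemma lamC p : prime p ->
  (forall q b c, prime q -> b \in Op q -> c \in Op p -> lam b c = c) ->
  forall g c, c \in Op p -> lam g c = c.
Proof.
move=> pp H g c Hc; rewrite -(prod_constt g).
elim/big_rec: _ => [|i x _ Kx]; first by rewrite lam1.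
set z := lam (pinv x) (g.`_i).
have Ez : g.`_i * x = x * lam x z by rewrite lam_inv mulBC.
rewrite Ez (@lam_comp _ z x) ?circE //.
have zi : i.-elt z by apply: lam_pelt; apply: p_elt_constt.
have -> : lam z c = c.
  case: (boolP (prime i)) => pi; first by apply: (H i) => //; rewrite memOp.
  by rewrite (peltN pi zi) lam1.
exact: Kx.
Qed.

Lemma notdvd_pred p : prime p -> ~~ (p %| p.-1).
Proof.
move=> pp; apply/negP => /dvdn_leq H.
have p1 := prime_gt1 pp.
have : 0 < p.-1 by rewrite -subn1 subn_gt0.
by move/H; rewrite leqNgt ltn_predL (ltnW p1).
Qed.

Lemma valX p d m : prime p -> d \in Op p -> val (d ^+ m) = (val d) ^+ m.
Proof.
move=> pp Hd; elim: m => [|m IH] //.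
have Hl : lam (d ^+ m) d = d by apply: (lamD pp pp (notdvd_pred pp)); rewrite ?groupX.
by rewrite expgSr -{2}Hl circE IH expgS.
Qed.

Lemma lamB p : (forall d u, d \in Op p -> lam d u = u) ->
  forall y c u, c \in Op p -> lam (y * c) u = lam y u.
Proof.
move=> H y c u Hc.
set z := lam (pinv y) c.
have -> : y * c = y * lam y z by rewrite lam_inv.
by rewrite (@lam_comp _ z y) ?circE // (H z u) // lam_Op.
Qed.

Lemma lamA p g c0 : prime p -> c0 \in Op p -> lam g c0 != c0 ->
  forall d u, d \in Op p -> lam d u = u.
Proof.
move=> pp Hc0 ne.
have [q [b [c1 [pq [Hb [Hc1 ne1]]]]]] : exists q b c1, prime q /\ b \in Op q /\ c1 \in Op p /\ lam b c1 != c1.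
  apply: NNPP => Hn; move/negP: ne; apply; apply/eqP; apply: (lamC pp) => // q b c pq Hb Hc.
  apply/eqP; apply/negPn/negP => Hne; apply: Hn; by exists q, b, c.
have hqp : q %| p.-1.
  by apply/negPn/negP => nd; move/eqP: ne1; rewrite (lamD pp pq nd Hb Hc1).
have p1 := prime_gt1 pp; have q1 := prime_gt1 pq.
have qp : q < p.
  have : 0 < p.-1 by rewrite -subn1 subn_gt0.
  by move/(dvdn_leq)/(_ hqp) => H; apply: leq_ltn_trans H _; rewrite ltn_predL (ltnW p1).
have hnd : ~~ (p %| q.-1).
  apply/negP => /dvdn_leq; rewrite -subn1 subn_gt0 => /(_ q1) H.
  by move: (leq_ltn_trans H (leq_ltn_trans (leq_subr 1 q) qp)); rewrite ltnn.
have Hpq : forall d b', d \in Op p -> b' \in Op q -> lam d b' = b'.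
  by move=> d b' Hd Hb'; apply: (lamD pq pp hnd Hd Hb').
have [y [Ey Hy]] := Op_cyc pp.
have : lam b y \in <[y]> by rewrite -Ey lam_Op // Ey cycle_id.
case/cycleP => k Hk.
have Hsc : forall c, c \in Op p -> lam b c = c ^+ k.
  by move=> c; rewrite Ey => /cycleP[m ->]; rewrite lamX Hk -!expgM mulnC.
have oy : #[y] = p.
  case/primeP: (pp) => _ Hd; case/orP: (Hd _ Hy) => /eqP // /eqP.
  rewrite order_eq1 => /eqP y1; move: Hc1 ne1; rewrite Ey y1 cycle1 inE => /eqP ->.
  by rewrite lam_1 eqxx.
have Hyy : lam b y != y.
  apply/negP => /eqP Eb; move/eqP: ne1; apply.
  by move: Hc1; rewrite Ey => /cycleP[m ->]; rewrite lamX Eb.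
have k0 : 0 < k.
  rewrite lt0n; apply/negP => /eqP k0; move: Hk; rewrite k0 expg0 -(lam_1 b) => /lam_inj y1.
  by move: oy; rewrite y1 order1 => E; move: p1; rewrite -E.
have conj : forall d, d \in Op p -> forall u, lam d u = lam (lam b d) u.
  move=> d Hd u.
  have E1 : val (b * lam b d) = val d * val b by rewrite circE.
  have E2 : val (b * lam b d) = val b * val (lam b d).
    by rewrite mulBC; have := circE (lam b d) b; rewrite (Hpq (lam b d) b) ?lam_Op.
  have := @lam_comp _ _ _ (lam (pinv b) u) E1; rewrite (@lam_comp _ _ _ _ E2) (lam_comm b d).
  by rewrite !lam_inv => ->.
have Hcop : coprime k.-1 p.
  rewrite coprime_sym prime_coprime //; apply/negP => /dvdnP[j Ej].
  move/eqP: Hyy; apply; rewrite Hk -{1}(prednK k0) -addn1 expgD Ej mulnC expgM -oy expg_order.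
  by rewrite expg1n mul1g expg1.
have [u' Hu'] := N1 Hcop (prime_gt0 pp).
move=> d u Hd.
set e := d ^+ k.-1.
have He : e \in Op p by rewrite groupX.
have Hel : forall v, lam e v = v.
  move=> v; rewrite -[v](lam_inv d).
  have Hed : lam e d = d by apply: (lamD pp pp (notdvd_pred pp)).
  have : val (e * lam e d) = val d * val e by rewrite circE.
  rewrite Hed => /(@lam_comp _ _ _ (lam (pinv d) v)) <-.
  by rewrite /e -expgSr prednK // -Hsc // -conj.
have od : #[d] %| p by rewrite -oy; move: Hd; rewrite Ey => /cycleP[m ->]; apply: order_dvdG; rewrite mem_cycle.
have -> : d = e ^+ u'.
  rewrite /e -expgM; apply/eqP; rewrite -{1}(expg1 d) eq_expg_mod_order; apply/eqP.
  by have := congr1 (modn^~ #[d]) Hu'; rewrite /= !(modn_dvdm _ od) mulnC => ->.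
rewrite (@lam_pow e _ u') ?(valX _ pp) //.
by elim: u' {Hu'} => //= m ->; rewrite Hel.
Qed.

Lemma lam_orbit g a u : lam (lam g a) u = lam a u.
Proof.
have E : lam g a = a * (a^-1 * lam g a) by rewrite mulKVg.
rewrite E; set dl := a^-1 * lam g a.
rewrite -(prod_constt dl); elim/big_rec: _ => [|i x _ Kx]; first by rewrite mulg1.
have -> : a * (dl.`_i * x) = (a * x) * dl.`_i by rewrite [dl.`_i * x]mulBC mulgA.
have Edl : dl.`_i = (a.`_i)^-1 * lam g (a.`_i).
  by rewrite /dl consttM ?consttV ?lam_constt //; apply: mulBC.
case: (eqVneq (lam g (a.`_i)) (a.`_i)) => Hai.
  by rewrite Edl Hai mulVg mulg1.
case: (boolP (prime i)) => pi; last first.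
  by move: Hai; rewrite (peltN pi (p_elt_constt _ _)) lam_1 eqxx.
have Ha : a.`_i \in Op i by rewrite memOp p_elt_constt.
rewrite (lamB (lamA pi Ha Hai)) //.
by rewrite memOp p_elt_constt.
Qed.

Lemma lamQ p g c0 : prime p -> c0 \in Op p -> lam g c0 != c0 ->
  exists b c1, lam b c1 != c1 /\ val c1 * val b = val b * val (lam b c1).
Proof.
move=> pp Hc0 ne.
have [q [b [c1 [pq [Hb [Hc1 ne1]]]]]] : exists q b c1, prime q /\ b \in Op q /\ c1 \in Op p /\ lam b c1 != c1.
  apply: NNPP => Hn; move/negP: ne; apply; apply/eqP; apply: (lamC pp) => // q b c pq Hb Hc.
  apply/eqP; apply/negPn/negP => Hne; apply: Hn; by exists q, b, c.
have hqp : q %| p.-1.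
  by apply/negPn/negP => nd; move/eqP: ne1; rewrite (lamD pp pq nd Hb Hc1).
have p1 := prime_gt1 pp; have q1 := prime_gt1 pq.
have qp : q < p.
  have : 0 < p.-1 by rewrite -subn1 subn_gt0.
  by move/(dvdn_leq)/(_ hqp) => H; apply: leq_ltn_trans H _; rewrite ltn_predL (ltnW p1).
have hnd : ~~ (p %| q.-1).
  apply/negP => /dvdn_leq; rewrite -subn1 subn_gt0 => /(_ q1) H.
  by move: (leq_ltn_trans H (leq_ltn_trans (leq_subr 1 q) qp)); rewrite ltnn.
exists b, c1; split => //.
have := circE (lam b c1) b; rewrite (lamD pq pp hnd (lam_Op b Hc1) Hb) => <-.
by rewrite -circE mulBC.
Qed.

Lemma lam_triv : abelian GG -> forall g u, lam g u = u.
Proof.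
move=> Hab g; apply: (@morph_eq (lam g) id) => [x y|x y|p c pp Hc] //=; first exact: lamM.
apply/eqP; apply/negPn/negP => ne.
have [b [c1 [ne1 E]]] := lamQ pp Hc ne.
have Ec : val c1 * val b = val b * val c1 by apply: (centsP Hab); apply: valP.
move/eqP: ne1; apply; apply: val_inj; apply: (@mulgI _ (val b)); by rewrite -E Ec.
Qed.

Hypothesis Htr : forall x y : T, exists g, g \in GG /\ g x = y.
Variable e : T.

Lemma aB_orb x u : lam (aB x) u = lam (aB e) u.
Proof.
have [g [Hg <-]] := Htr e x.
have -> : aB (g e) = lam (Sub g Hg) (aB e) by rewrite lam_aB.
exact: lam_orbit.
Qed.

Lemma sB_aB x u : lam (sB x) (lam (aB x) u) = u.
Proof. by rewrite -(@lam_comp zeroB) ?lam1 //= phi1 mulVg. Qed.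
Lemma aB_sB x u : lam (aB x) (lam (sB x) u) = u.
Proof. by rewrite -(@lam_comp zeroB) ?lam1 //= phi1 mulgV. Qed.

Lemma sig_ret x y z : sig (op x z) = sig (op y z).
Proof.
have E : lam (sB x) (aB z) = lam (sB y) (aB z).
  by rewrite -{1}(aB_sB y (aB z)) aB_orb -(aB_orb x) sB_aB.
rewrite !lam_aB /= !sigE in E.
by apply: invg_inj; rewrite -!phi1; move/(congr1 val): E.
Qed.

Lemma sig_triv : abelian GG -> forall x, sig x = sig e.
Proof.
move=> Hab x; have [g [Hg <-]] := Htr e x.
have : lam (Sub g Hg) (aB e) = aB e by rewrite lam_triv.
by rewrite lam_aB /= => /(congr1 val) /=; rewrite !phi1 => /invg_inj.
Qed.

End CS.

Section RetL.
Variable M : magma.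

Lemma ret_relP (x y : M) : reflect (forall z, mop x z = mop y z) (ret_rel x y).
Proof. by apply: (iffP forallP) => H z; [apply/eqP|apply/eqP]. Qed.

Lemma ret_rel_refl (x : M) : ret_rel x x.
Proof. by apply/ret_relP. Qed.

Lemma ret_proj_eq (x y : M) : (ret_proj x == ret_proj y) = ret_rel x y.
Proof.
rewrite -val_eqE /=; apply/eqP/ret_relP => [E z|H].
  have : y \in ret_cls x by rewrite E inE ret_rel_refl.
  by rewrite inE => /ret_relP ->.
apply/setP => w; rewrite !inE; apply/ret_relP/ret_relP => H' z; by rewrite -H' ?H.
Qed.

Lemma ret_surj (C : ret_type M) : exists x, C = ret_proj x.
Proof.
case: C => C HC; case/imsetP: (HC) => x _ Ex; exists x; exact: val_inj.
Qed.

Lemma card_Ret1 (x0 : M) : (forall x y : M, ret_rel x y) -> #|Ret M| = 1%N.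
Proof.
move=> H; rewrite -cardsT; apply/eqP/cards1P; exists (ret_proj x0).
apply/setP => C; rewrite !inE; have [x ->] := ret_surj C.
by rewrite ret_proj_eq H.
Qed.

Lemma card_Ret1_inv : #|Ret M| = 1%N -> forall x y : M, ret_rel x y.
Proof.
move=> H x y; rewrite -ret_proj_eq; apply/eqP.
have : #|Ret M| <= 1%N by rewrite H.
by move/card_le1_eqP; apply; rewrite inE.
Qed.

Lemma ret_op_proj (x y : M) :
  (forall x y y' : M, ret_rel y y' -> ret_rel (mop x y) (mop x y')) ->
  ret_op (ret_proj x) (ret_proj y) = ret_proj (mop x y).
Proof.
move=> Hc; rewrite /ret_op /=.
case: pickP => [x' Hx'|H]; last by move: (H x); rewrite inE ret_rel_refl.
case: pickP => [y' Hy'|H]; last by move: (H y); rewrite inE ret_rel_refl.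
rewrite inE in Hx'; rewrite inE in Hy'.
apply/eqP; rewrite ret_proj_eq.
have E1 : mop x' y' = mop x y' by move/ret_relP: Hx' => ->.
rewrite E1; have := Hc x y y' Hy'; move/ret_relP => E; apply/ret_relP => z; by rewrite E.
Qed.

End RetL.

Local Close Scope group_scope.

Theorem mainTheorem16 (T : finType) (op : T -> T -> T) :
  cycle_set op -> uniconnected op -> odd #|T| -> squarefree #|T| ->
  [/\ Zgroup (permG op),
      (exists2 n, n <= 2 & has_mpl (cs_magma op) n)
    & 1 < #|T| -> (has_mpl (cs_magma op) 1 <-> abelian (permG op))].
Proof.
move=> Hcs Hu Hodd Hsq.
have n0 : 0 < #|T| by move: Hodd; case: #|T|.
have [e _] : exists e : T, true by move/card_gt0P: n0 => [e _]; exists e.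
have Htr : forall x y : T, exists g, g \in GG op /\ g x = y.
  by move=> x y; have [g [[Hg Hgx] _]] := Hu x y; exists g.
have cardG : #|permG op| = #|T|.
  have inj : {in permG op &, injective (fun g : {perm T} => g e)}.
    move=> g h Hg Hh E; have [k [_ Hk]] := Hu e (g e).
    by rewrite -(Hk g) ?(Hk h).
  rewrite -(card_in_imset inj); apply: eq_card => y.
  have [g [Hg <-]] := Htr e y; by rewrite inE (imset_f (fun g : {perm T} => g e) Hg).
have HsqB : forall p, prime p -> ~~ (p * p %| #|{: Bt op}|).
  by move=> p pp; rewrite card_sig; have := Hsq p pp; rewrite -cardG.
have logle : forall p, prime p -> logn p #|T| <= 1.
  move=> p pp; rewrite leqNgt; apply/negP => H; have := Hsq p pp; rewrite mulnn.
  by rewrite (pfactor_dvdn _ _ n0) ?H.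
have Hsr := sig_ret Hcs HsqB Htr e.
have Hcomp : forall x y y' : cs_magma op, ret_rel y y' -> ret_rel (mop x y) (mop x y').
  move=> x y y' /ret_relP Hy0; apply/ret_relP => w /=.
  have Hy : forall z, op y z = op y' z := Hy0.
  have Esig : sig Hcs y = sig Hcs y' by apply/permP => z; rewrite !sigE Hy.
  have E : sig Hcs (op x y) = sig Hcs (op x y').
    have h1 := sig_id Hcs x y; have h2 := sig_id Hcs x y'.
    apply: (@mulgI _ (sig Hcs x)); by rewrite h1 h2 Esig [op y x]Hy.
  change (op (op x y) w = op (op x y') w).
  by rewrite -(sigE Hcs (op x y)) -(sigE Hcs (op x y')) E.
have rel_sig : forall x y : T, sig Hcs x = sig Hcs y -> ret_rel (M := cs_magma op) x y.
  move=> x y E; apply/ret_relP => z; change (op x z = op y z).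
  by rewrite -(sigE Hcs x) -(sigE Hcs y) E.
have sig_rel : forall x y : T, ret_rel (M := cs_magma op) x y -> sig Hcs x = sig Hcs y.
  move=> x y /ret_relP E0; have E : forall z, op x z = op y z := E0.
  by apply/permP => z; rewrite !sigE E.
have R2 : #|Retn 2 (cs_magma op)| = 1%N.
  change (#|Ret (Ret (cs_magma op))| = 1%N).
  apply: (@card_Ret1 (Ret (cs_magma op)) (ret_proj (M := cs_magma op) e)) => C D.
  have [x ->] := ret_surj C; have [y ->] := ret_surj D.
  apply/ret_relP => Z; have [z ->] := ret_surj Z.
  change (ret_op (ret_proj (M := cs_magma op) x) (ret_proj z) = ret_op (ret_proj y) (ret_proj z)).
  rewrite !ret_op_proj //; apply/eqP; rewrite ret_proj_eq; apply: rel_sig; exact: Hsr.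
have R1 : #|Retn 1 (cs_magma op)| = 1%N <-> forall x y : T, sig Hcs x = sig Hcs y.
  change (#|Ret (cs_magma op)| = 1%N <-> forall x y : T, sig Hcs x = sig Hcs y).
  split => [H x y|H]; first by apply: sig_rel; apply: card_Ret1_inv.
  by apply: (@card_Ret1 (cs_magma op) e) => x y; apply: rel_sig.
split.
- apply/forall_inP => V /SylowP[p pp sylV].
  have cV : #|V| = (#|T|`_p)%N by rewrite (card_Hall sylV) cardG.
  rewrite p_part in cV; have := logle p pp.
  case: (logn p #|T|) cV => [|[|//]] cV _.
    by apply/cyclicP; exists 1%g; rewrite cycle1; apply: card1_trivg; rewrite cV.
  by apply: prime_cyclic; rewrite cV expn1.
- case: (eqVneq #|T| 1%N) => [T1|T1].
    by exists 0 => //; split.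
  case: (boolP [forall x, [forall y, sig Hcs x == sig Hcs y]]) => Hb.
    exists 1 => //; split; first by apply/R1 => x y; apply/eqP; move/forallP: Hb => /(_ x)/forallP/(_ y).
    move=> -[|m] // _ E; move/eqP: T1; apply; exact: E.
  exists 2 => //; split => // -[|[|//]] _.
    move=> E; move/eqP: T1; apply; exact: E.
  move/R1 => H; move/negP: Hb; apply; apply/forallP => x; apply/forallP => y; apply/eqP; exact: H.
- move=> T1; split.
    case=> /R1 Hs _.
    have Es : sigma_set op = [set sig Hcs e].
      apply/setP => s; rewrite sigma_setE inE; apply/existsP/eqP => [[x /eqP ->]|->]; first exact: Hs.
      by exists e.
    by rewrite /permG Es; apply: cycle_abelian.
  move=> Hab; have Hs := sig_triv Hcs HsqB Htr e Hab.
  split; first by apply/R1 => x y; rewrite !Hs.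
  move=> -[|m] // _ E; have E' : #|T| = 1%N := E; by move: T1; rewrite E'.
Qed.
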